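(* Let $u$ be any element of $W=S_n$ and let $U=[e,u]_R$. Then the multiplication map $W/U\times U\to W$, $(x,y)\mapsto xy$, is surjective.
   Context: $S_n$ is the symmetric group with product $(uv)(i)=u(v(i))$, generated by adjacent transpositions. The length $\ell(w)$ is the number of inversions $\{(i,j): i<j,\ w(i)>w(j)\}$. Right weak order: $v\leq_R w$ iff $w=vz$ with $\ell(w)=\ell(v)+\ell(z)$; $[e,u]_R=\{v:v\leq_R u\}$. For $U\subseteq W$, $W/U=\{w\in W:\ell(wu)=\ell(w)+\ell(u)\ \forall u\in U\}$. *)

(* Defs.v *)
From mathcomp Require Import all_boot all_fingroup.
Set Implicit Arguments. Unset Strict Implicit. Unset Printing Implicit Defensive.

(* S_n = 'S_n (permutations of 'I_n = {0,...,n-1}).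
   Paper product: (u v)(i) = u (v i).  MathComp's (u * v) is i |-> v (u i),
   so we define the paper's product explicitly. *)
Definition pmul n (u v : 'S_n) : 'S_n := (v * u)%g.

Definition plength n (w : 'S_n) : nat :=
  #|[set p : 'I_n * 'I_n | (p.1 < p.2)%N && (w p.2 < w p.1)%N]|.

Definition weakR n (v w : 'S_n) : Prop :=
  exists z : 'S_n, w = pmul v z /\ plength w = (plength v + plength z)%N.

Definition weak_interval n (u : 'S_n) : 'S_n -> Prop := fun v => weakR v u.

Definition left_quot n (U : 'S_n -> Prop) : 'S_n -> Prop :=
  fun w => forall x, U x -> plength (pmul w x) = (plength w + plength x)%N.

(* Main.v *)
Require Import Defs.
From mathcomp Require Import all_boot all_fingroup.
From mathcomp Require Import zify.

Set Implicit Arguments. Unset Strict Implicit. Unset Printing Implicit Defensive.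

Section S.
Variable n : nat.
Implicit Types (a b z u w m g : 'S_n) (p : 'I_n * 'I_n).

Definition Inv a : {set 'I_n * 'I_n} :=
  [set p : 'I_n * 'I_n | (p.1 < p.2)%N && (a p.2 < a p.1)%N].

Lemma plengthE a : plength a = #|Inv a|.
Proof. by []. Qed.

Lemma pmulE u v i : pmul u v i = u (v i).
Proof. by rewrite /pmul permM. Qed.

Lemma pmulA a b c : pmul a (pmul b c) = pmul (pmul a b) c.
Proof. by rewrite /pmul mulgA. Qed.

Definition J z a : {set 'I_n * 'I_n} :=
  [set p : 'I_n * 'I_n | (p.1 < p.2)%N &&
      ((z (a p.2) < z (a p.1))%N != (a p.2 < a p.1)%N)].

Lemma InvM z a : Inv (pmul z a) = (Inv a :\: J z a) :|: (J z a :\: Inv a).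
Proof.
apply/setP => p; rewrite !inE !pmulE.
case: (p.1 < p.2)%N => //=.
by case: (a p.2 < a p.1)%N; case: (z (a p.2) < z (a p.1))%N.
Qed.

Lemma neq_val (i j : 'I_n) : i != j -> val i != val j.
Proof. by []. Qed.

Lemma perm_neq a (i j : 'I_n) : (i != j) = (a i != a j).
Proof. by rewrite (inj_eq perm_inj). Qed.

Definition srt (c d : 'I_n) : 'I_n * 'I_n := if (c < d)%N then (c, d) else (d, c).

Lemma cardJ z a : #|J z a| = #|Inv z|.
Proof.
have -> : Inv z = [set srt (a p.1) (a p.2) | p in J z a].
  apply/setP => q; apply/idP/idP.
  - rewrite inE => /andP [lt12 zlt].
    case: q lt12 zlt => c d /= lt12 zlt.
    have ne : (a^-1 c)%g != (a^-1 d)%g.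
      by rewrite (inj_eq perm_inj); apply/eqP => e; move: lt12; rewrite e ltnn.
    case: (ltngtP (a^-1 c)%g (a^-1 d)%g) => [h|h|h]; last by move: ne; rewrite (val_inj h) eqxx.
    + apply/imsetP; exists ((a^-1 c)%g, (a^-1 d)%g).
        rewrite inE /= h /= !permKV. by rewrite zlt ltnNge ltnW.
      by rewrite /= /srt !permKV lt12.
    + apply/imsetP; exists ((a^-1 d)%g, (a^-1 c)%g).
        rewrite inE /= h /= !permKV. rewrite lt12 /=. by rewrite ltnNge ltnW.
      by rewrite /= /srt !permKV ltnNge ltnW.
  - case/imsetP => p; rewrite inE => /andP [lt12 H] ->.
    have ne : a p.1 != a p.2 by rewrite -perm_neq; apply/eqP => e; move: lt12; rewrite e ltnn.
    have nez : z (a p.1) != z (a p.2) by rewrite -perm_neq.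
    move: H nez; rewrite /srt.
    case: (ltngtP (a p.1) (a p.2)) => h; last by move: ne; rewrite (val_inj h) eqxx.
    + case: (ltngtP (z (a p.2)) (z (a p.1))) => h2 //= _ _.
      by rewrite inE /= h h2.
    + case: (ltngtP (z (a p.2)) (z (a p.1))) => h2 //= _.
      * by rewrite inE /= h h2.
      * by rewrite (val_inj h2) eqxx.
rewrite card_in_imset //.
move=> p q; rewrite !inE => /andP [ltp _] /andP [ltq _].
case: p ltp => p1 p2 /= ltp; case: q ltq => q1 q2 /= ltq.
rewrite /srt.
case: ifP => h1; case: ifP => h2 [e1 e2].
- by rewrite (perm_inj e1) (perm_inj e2).
- have e1' := perm_inj e1; have e2' := perm_inj e2. subst. lia.
- have e1' := perm_inj e1; have e2' := perm_inj e2. subst. lia.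
- by rewrite (perm_inj e1) (perm_inj e2).
Qed.


Lemma lenM z a :
  plength (pmul z a) + 2 * #|Inv a :&: J z a| = plength z + plength a.
Proof.
rewrite !plengthE InvM cardsU.
have -> : (Inv a :\: J z a) :&: (J z a :\: Inv a) = set0.
  by apply/setP => p; rewrite in_setI !in_setD in_set0; case: (p \in Inv a); case: (p \in J z a).
rewrite cards0 subn0 !cardsD cardJ.
have h1 := subset_leq_card (subsetIl (Inv a) (J z a)).
have h2 := subset_leq_card (subsetIr (Inv a) (J z a)).
rewrite [J z a :&: _]setIC. rewrite cardJ in h2. lia.
Qed.

Lemma lenM_le z a : plength (pmul z a) <= plength z + plength a.
Proof. have := lenM z a; lia. Qed.

Lemma lenM_add z a : Inv a \subset Inv (pmul z a) ->
  plength (pmul z a) = plength z + plength a.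
Proof.
move=> sub; have := lenM z a.
have -> : Inv a :&: J z a = set0.
  apply/setP => p; rewrite in_setI in_set0; apply/negP => /andP [pI pJ].
  have := subsetP sub p pI; rewrite InvM in_setU !in_setD.
  by rewrite pI pJ.
rewrite cards0; lia.
Qed.

Section Adj.
Variables (k k' : 'I_n).
Hypothesis hk : (k' : nat) = (k : nat).+1.
Let s := tperm k k'.
Let kk := (k, k').

Lemma ordneq (i j : 'I_n) : i != j -> ((i : nat) != j).
Proof. by []. Qed.

Lemma sE i : s i = if i == k then k' else if i == k' then k else i.
Proof.
rewrite /s; case: (eqVneq i k) => [->|h1]; first by rewrite tpermL.
case: (eqVneq i k') => [->|h2]; first by rewrite tpermR.
by rewrite tpermD // eq_sym.
Qed.

Lemma memInv a (i j : 'I_n) : ((i, j) \in Inv a) = ((i < j)%N && (a j < a i)%N).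
Proof. by rewrite inE. Qed.

Lemma vneq a (i j : 'I_n) : i != j -> ((a i : nat) != a j).
Proof. by move=> h; rewrite (perm_neq a) in h. Qed.

Lemma kkInv_s a : (kk \in Inv (pmul a s)) = ~~ (kk \in Inv a).
Proof.
rewrite !memInv !pmulE !sE eqxx.
have nkk : k' != k by apply/eqP => e; move: hk; rewrite e; lia.
rewrite (negbTE nkk) eqxx.
have hkk : (k < k')%N by lia.
rewrite hkk /=; case: ltngtP => //= e; by move: (vneq a nkk); rewrite e eqxx.
Qed.

Lemma ssK a : pmul (pmul a s) s = a.
Proof. by rewrite -pmulA /pmul tperm2 mul1g. Qed.

Lemma knk : k' != k.
Proof. apply/eqP => e; move: hk; rewrite e; lia. Qed.

Lemma s_inv_pair (i j : 'I_n) : (i < j)%N -> (s j < s i)%N -> i = k /\ j = k'.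
Proof.
move=> lij; rewrite !sE.
case: (eqVneq i k) => [ei|ni]; case: (eqVneq j k) => [ej|nj].
- by subst; rewrite ltnn in lij.
- case: (eqVneq j k') => [ej'|nj'] //.
  subst => c. have := ordneq nj; have := ordneq nj'; lia.
- subst; case: (eqVneq i k') => [ei'|ni'].
  + subst; lia.
  + move=> c; have := ordneq ni; have := ordneq ni'; lia.
- case: (eqVneq i k') => [ei'|ni']; case: (eqVneq j k') => [ej'|nj'].
  + by subst; rewrite ltnn in lij.
  + subst => c; have := ordneq nj; have := ordneq nj'; lia.
  + subst => c; have := ordneq ni; have := ordneq ni'; lia.
  + move=> c; lia.
Qed.

Lemma S_sub a b : Inv a \subset Inv b -> (kk \in Inv a) = (kk \in Inv b) ->
  Inv (pmul a s) \subset Inv (pmul b s).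
Proof.
move=> sub ekk; apply/subsetP => [[i j]]; rewrite !memInv !pmulE => /andP [lij h].
rewrite lij /=.
case: (ltngtP (s i) (s j)) => c.
- have := subsetP sub (s i, s j); rewrite !memInv c h => /(_ isT) /andP [_ ->]. by [].
- have [ei ej] := s_inv_pair lij c. subst i j.
  move: h; rewrite /s tpermL tpermR => h.
  move: ekk; rewrite !memInv.
  have -> : (k < k')%N by lia.
  rewrite /= => ekk.
  have : ~~ (a k' < a k)%N by have := vneq a knk; lia.
  rewrite ekk => hb. have := vneq b knk; lia.
- have e := val_inj c; rewrite (perm_inj e) in lij; by rewrite ltnn in lij.
Qed.

Lemma subInv a b : Inv a \subset Inv b ->
  forall i j : 'I_n, (i < j)%N -> (a j < a i)%N -> (b j < b i)%N.
Proof. by move=> sub i j lij h; have := subsetP sub (i, j); rewrite !memInv lij h => /(_ isT) /andP [_]. Qed.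

Lemma Lift u g : Inv u \subset Inv g -> kk \in Inv g -> kk \notin Inv u ->
  Inv u \subset Inv (pmul g s).
Proof.
move=> sub hg hu.
have sub' := subInv sub.
have hkk : (k < k')%N by lia.
move: hg hu; rewrite !memInv hkk /= => hg hu.
have hu' : (u k < u k')%N by have := vneq u knk; lia.
apply/subsetP => [[i j]]; rewrite !memInv !pmulE => /andP [lij h].
rewrite lij /= !sE.
case: (eqVneq i k) => [ei|ni].
- subst i. have nj : j != k by apply/eqP => e; subst; rewrite ltnn in lij.
  rewrite (negbTE nj).
  case: (eqVneq j k') => [ej'|nj'].
  + subst j; lia.
  + apply: sub'; have := ordneq nj'; lia.
- case: (eqVneq i k') => [ei'|ni'].
  + subst i. have nj : j != k by apply/eqP => e; subst; lia.
    have nj' : j != k' by apply/eqP => e; subst; rewrite ltnn in lij.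
    rewrite (negbTE nj) (negbTE nj').
    have := sub' _ _ lij h; lia.
  + case: (eqVneq j k) => [ej|nj].
    * subst j. have := sub' _ _ lij h; lia.
    * case: (eqVneq j k') => [ej'|nj'].
      -- subst j. apply: sub'; have := ordneq ni; lia.
      -- exact: sub'.
Qed.

Lemma Inv_s_sub : Inv s \subset [set kk].
Proof.
apply/subsetP => [[i j]]; rewrite memInv => /andP [lij c].
have [-> ->] := s_inv_pair lij c. by rewrite inE.
Qed.

Lemma kk_in_s : kk \in Inv s.
Proof. rewrite memInv /s tpermL tpermR; apply/andP; split; lia. Qed.

Lemma len_s_up a : plength (pmul a s) <= plength a + 1.
Proof.
have := lenM_le a s; have := subset_leq_card Inv_s_sub; rewrite cards1 !plengthE; lia.
Qed.

Lemma len_s_down a : kk \in Inv a -> plength (pmul a s) < plength a.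
Proof.
move=> ha; have := lenM a s.
have h1 := subset_leq_card Inv_s_sub; rewrite cards1 in h1.
have : kk \in Inv s :&: J a s.
  rewrite in_setI kk_in_s /= inE /= /s tpermL tpermR.
  move: ha; rewrite memInv => /andP [hkk ha].
  have hlt : (a k < a k')%N = false by lia.
  by rewrite hkk hlt.
move=> kin; have h2 : 0 < #|Inv s :&: J a s| by apply/card_gt0P; exists kk.
rewrite !plengthE in h1 *. lia.
Qed.

End Adj.

Lemma desc_gap a d : forall i j : 'I_n, (j : nat) = i + d.+1 -> (a j < a i)%N ->
  exists k k' : 'I_n, (k' : nat) = (k : nat).+1 /\ (k, k') \in Inv a.
Proof.
elim: d => [|d IH] i j hij h.
  exists i, j; split; first lia. by rewrite memInv h andbT; lia.
have him : (i.+1 < n)%N by have := ltn_ord j; lia.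
pose m := Ordinal him.
have nim : i != m by apply/eqP => e; have := congr1 val e; rewrite /=; lia.
case: (ltngtP (a m) (a i)) => c.
- exists i, m; split; first by []. by rewrite memInv c andbT /=.
- apply: (IH m j) => //=; [lia | lia].
- by have := vneq a nim; rewrite c eqxx.
Qed.

Lemma descent a : Inv a != set0 ->
  exists k k' : 'I_n, (k' : nat) = (k : nat).+1 /\ (k, k') \in Inv a.
Proof.
case: (set_0Vmem (Inv a)) => [->|[[i j] pin]]; first by rewrite eqxx.
move=> _; move: pin; rewrite memInv => /andP [lij h].
apply: (desc_gap (d := (j - i.+1)%N) (i := i) (j := j)) => //; lia.
Qed.

Definition cand w u m :=
  (Inv m \subset Inv (pmul w m)) && (Inv u \subset Inv (pmul w m)).

Lemma Phi w N : forall u m, plength m <= N -> cand w u m ->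
  (forall m', cand w u m' -> plength m <= plength m') -> Inv m \subset Inv u.
Proof.
elim: N => [|N IH] u m hN /andP [A B] mmin.
- have : #|Inv m| = 0 by rewrite -plengthE; lia.
  by move/eqP; rewrite cards_eq0 => /eqP ->; rewrite sub0set.
case: (eqVneq (Inv m) set0) => [->|ne]; first by rewrite sub0set.
have [k [k' [hk km]]] := descent ne.
have kwm : (k, k') \in Inv (pmul w m) := subsetP A _ km.
have A' : Inv (pmul m (tperm k k')) \subset Inv (pmul w (pmul m (tperm k k'))).
  by rewrite pmulA; apply: (S_sub hk) => //; rewrite km kwm.
have ltm := len_s_down hk km.
case hku: ((k, k') \in Inv u); last first.
  have B' : Inv u \subset Inv (pmul w (pmul m (tperm k k'))).
    by rewrite pmulA; apply: (Lift hk) => //; rewrite hku.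
  have := mmin (pmul m (tperm k k')); rewrite /cand A' B' => /(_ isT) H.
  by have := leq_ltn_trans H ltm; rewrite ltnn.
have B' : Inv (pmul u (tperm k k')) \subset Inv (pmul w (pmul m (tperm k k'))).
  by rewrite pmulA; apply: (S_sub hk) => //; rewrite hku kwm.
have m'min : forall m'', cand w (pmul u (tperm k k')) m'' -> plength (pmul m (tperm k k')) <= plength m''.
  move=> m'' /andP [A2 B2]; rewrite leqNgt; apply/negP => lt2.
  have ku' : (k, k') \notin Inv (pmul u (tperm k k')) by rewrite (kkInv_s hk) hku.
  case hh: ((k, k') \in Inv (pmul w m'')).
  + have L1 : Inv (pmul u (tperm k k')) \subset Inv (pmul (pmul w m'') (tperm k k')) by apply: (Lift hk).
    have L2 : Inv (pmul (pmul u (tperm k k')) (tperm k k')) \subset Inv (pmul (pmul (pmul w m'') (tperm k k')) (tperm k k')).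
      apply: (S_sub hk) => //. by rewrite (negbTE ku') (kkInv_s hk) hh.
    rewrite !(ssK k k') in L2.
    have := mmin m''; rewrite /cand A2 L2 => /(_ isT) H.
    by have := leq_ltn_trans H (ltn_trans lt2 ltm); rewrite ltnn.
  + have km'' : (k, k') \notin Inv m''.
      by apply/negP => c; move: (subsetP A2 _ c); rewrite hh.
    have A3 : Inv (pmul m'' (tperm k k')) \subset Inv (pmul w (pmul m'' (tperm k k'))).
      by rewrite pmulA; apply: (S_sub hk) => //; rewrite (negbTE km'') hh.
    have B3 : Inv u \subset Inv (pmul w (pmul m'' (tperm k k'))).
      rewrite pmulA -(ssK k k' u); apply: (S_sub hk) => //.
      by rewrite (negbTE ku') hh.
    have := mmin (pmul m'' (tperm k k')); rewrite /cand A3 B3 => /(_ isT) H.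
    have H2 := len_s_up hk m''.
    have : plength m < plength m.
      apply: (leq_ltn_trans H); apply: (leq_ltn_trans H2); rewrite addn1.
      exact: (leq_ltn_trans lt2 ltm).
    by rewrite ltnn.
have IH' := IH (pmul u (tperm k k')) (pmul m (tperm k k')).
have sub' : Inv (pmul m (tperm k k')) \subset Inv (pmul u (tperm k k')).
  apply: IH' => //; first lia. by rewrite /cand A' B'.
have := S_sub hk sub'.
rewrite !(ssK k k') !(kkInv_s hk) km hku. by move=> /(_ erefl).
Qed.

End S.

Unset Implicit Arguments.

Theorem theorem4p5 (n : nat) (u : 'S_n) :
  forall w : 'S_n, exists (x y : 'S_n),
    left_quot (weak_interval u) x /\ weak_interval u y /\ w = pmul x y.
Proof.
move=> w.
pose w0 : 'S_n := perm (@rev_ord_inj n).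
pose m0 := (w0 * w^-1)%g.
have wm0 : pmul w m0 = w0 by rewrite /pmul /m0 mulgKV.
have Inv_w0 : forall a : 'S_n, Inv a \subset Inv w0.
  move=> a; apply/subsetP => [[i j]]; rewrite !memInv => /andP [lij _].
  rewrite lij /= /w0 !permE /=.
  have := ltn_ord i; have := ltn_ord j; lia.
have c0 : cand w u m0 by rewrite /cand wm0 !Inv_w0.
case: (arg_minnP (@plength n) c0) => m cm mmin.
have sub := @Phi n w (plength m) u m (leqnn _) cm mmin.
move/andP: cm => [A B].
pose x := pmul (pmul w m) (u^-1)%g.
pose y := pmul u (m^-1)%g.
exists x, y; split; [|split].
- move=> v [z [uz luz]].
  have xu : pmul x u = pmul w m by rewrite /x /pmul mulKVg.
  have lxu : plength (pmul x u) = plength x + plength u.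
    have H := @lenM_add n x u; apply: H; rewrite xu; exact: B.
  have e : pmul x u = pmul (pmul x v) z by rewrite uz pmulA.
  have h1 := lenM_le (pmul x v) z.
  have h2 := lenM_le x v.
  rewrite e in lxu. rewrite luz in lxu.
  move: h1 h2 lxu.
  move: (plength (pmul (pmul x v) z)) (plength (pmul x v)) (plength x) (plength v) (plength z).
  move=> a b c d f; lia.
- exists m; split.
    by rewrite /y /pmul mulKVg.
  have ym : pmul y m = u by rewrite /y /pmul mulKVg.
  have H := @lenM_add n y m; rewrite ym in H; exact: H.
- by rewrite /x /y /pmul mulgA mulgK mulKg.
Qed.
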